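(* Let $\beta\ge 0$, and let $\pi^*_\beta=\{\pi^*_{h,\beta}\}_{h\in[H]}$ be a deterministic Markov optimal policy of the penalized machine MDP $\mathcal{M}^{\mathtt{M}}_\beta$, chosen greedily, i.e. $\pi^*_{h,\beta}(s)\in\arg\max_{a\in\bar{\mathcal{A}}}Q^*_{h,\beta}(s,a)$ for all $h,s$. Then for every $s\in\mathcal{S}$ and $h\in[H]$ with $\pi^*_{h,\beta}(s)\ne\text{defer}$, $$Q_h^*\big(s,\pi^*_{h,\beta}(s)\big)-V_h^{\pi^{\mathtt{H}}}(s)\ \ge\ \beta,$$ where $Q^*_h$ is the optimal $Q$-function of the unpenalized machine MDP $\mathcal{M}^{\mathtt{M}}$ and $V_h^{\pi^{\mathtt{H}}}$ is the value (in $\mathcal{M}^{\mathtt{M}}$) of the machine policy that always chooses defer.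
   Context: A human acts in a finite-horizon episodic MDP with finite state set $\mathcal{S}$, finite action set $\mathcal{A}$, horizon $H$, time-dependent transition kernel $p_h(s'\mid s,a)$ and time-dependent reward $r_h(s,a)\in[0,1]$, $h\in[H]$. The human follows a fixed stochastic policy $\pi^{\mathtt{H}}$ with $\pi^{\mathtt{H}}_h(a\mid s)<1$. The machine chooses advice $a^{\mathtt{M}}\in\bar{\mathcal{A}}:=\mathcal{A}\cup\{\text{defer}\}$; with adherence $\theta:\mathcal{S}\times\mathcal{A}\to[0,1]$, the human's action satisfies $\mathbb{P}_h(a^{\mathtt{H}}=a\mid s,\text{defer})=\pi^{\mathtt{H}}_h(a\mid s)$, and for $a^{\mathtt{M}}\ne\text{defer}$: $\mathbb{P}_h(a^{\mathtt{H}}=a^{\mathtt{M}}\mid s,a^{\mathtt{M}})=\theta(s,a^{\mathtt{M}})$ and $\mathbb{P}_h(a^{\mathtt{H}}=a\mid s,a^{\mathtt{M}})=(1-\theta(s,a^{\mathtt{M}}))\pi^{\mathtt{H}}_h(a\mid s)/(1-\pi^{\mathtt{H}}_h(a^{\mathtt{M}}\mid s))$ for $a\ne a^{\mathtt{M}}$. The machine's MDP $\mathcal{M}^{\mathtt{M}}$ has states $\mathcal{S}$, actions $\bar{\mathcal{A}}$, transition $p^{\mathtt{M}}_h(s'\mid s,a^{\mathtt{M}})=\sum_{a}p_h(s'\mid s,a)\mathbb{P}_h(a\mid s,a^{\mathtt{M}})$ and reward $r^{\mathtt{M}}_h(s,a^{\mathtt{M}})=\sum_a r_h(s,a)\mathbb{P}_h(a\mid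 s,a^{\mathtt{M}})$. Values of deterministic Markov policies $\pi$ are $V^\pi_h(s)=\mathbb{E}[\sum_{h'=h}^H r^{\mathtt{M}}_{h'}(s_{h'},\pi_{h'}(s_{h'}))\mid s_h=s]$, $V^\pi_{H+1}\equiv 0$; $V^*_h=\max_\pi V^\pi_h$ and $Q^*_h(s,a)=r^{\mathtt{M}}_h(s,a)+\sum_{s'}p^{\mathtt{M}}_h(s'\mid s,a)V^*_{h+1}(s')$. The penalized MDP $\mathcal{M}^{\mathtt{M}}_\beta$ is identical to $\mathcal{M}^{\mathtt{M}}$ except its reward is $r^{\mathtt{M}}_{h,\beta}(s,a)=r^{\mathtt{M}}_h(s,a)-\beta\,\mathbb{I}\{a\ne\text{defer}\}$; $V^*_{h,\beta}$ and $Q^*_{h,\beta}(s,a)=r^{\mathtt{M}}_{h,\beta}(s,a)+\sum_{s'}p^{\mathtt{M}}_h(s'\mid s,a)V^*_{h+1,\beta}(s')$ denote its optimal value and $Q$-functions. *)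

(* Defs.v *)
From HB Require Import structures.
From mathcomp Require Import all_boot all_order all_algebra.
Set Implicit Arguments. Unset Strict Implicit. Unset Printing Implicit Defensive.
Import Order.TTheory GRing.Theory Num.Theory.
Local Open Scope ring_scope.

(* Steps are 0-indexed: paper's step h \in [H] = {1..H} is our h-1 \in {0..H-1};
   paper's V_{H+1} = 0 is our value at step H. Advice [None] is "defer",
   [Some a] is advising action a; so \bar A = option A. *)
Record hmdp (R : realFieldType) (S A : finType) := HMdp {
  horizon : nat;
  trans : nat -> S -> A -> S -> R;
  rew : nat -> S -> A -> R;
  piH : nat -> S -> A -> R;
  theta : S -> A -> R
}.

Section Defs.
Variables (R : realFieldType) (S A : finType) (M : hmdp R S A).

(* P_h(a^H = a | s, a^M) *)
Definition human_prob (h : nat) (s : S) (am : option A) (a : A) : R :=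
  match am with
  | None => piH M h s a
  | Some b => if a == b then theta M s b
              else (1 - theta M s b) * piH M h s a / (1 - piH M h s b)
  end.

Definition transM (h : nat) (s : S) (am : option A) (s' : S) : R :=
  \sum_(a : A) trans M h s a s' * human_prob h s am a.

Definition rewM (h : nat) (s : S) (am : option A) : R :=
  \sum_(a : A) rew M h s a * human_prob h s am a.

Definition rewMb (beta : R) (h : nat) (s : S) (am : option A) : R :=
  rewM h s am - (if am is Some _ then beta else 0).

Definition policy := {ffun 'I_(horizon M) -> {ffun S -> option A}}.

Definition pol_at (pi : policy) (h : nat) (s : S) : option A :=
  match insub h with Some i => pi i s | None => None end.

Definition defer_policy : policy := [ffun _ => [ffun _ => None]].

Fixpoint value_aux (rw : nat -> S -> option A -> R) (pi : nat -> S -> option A)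
    (n h : nat) (s : S) : R :=
  match n with
  | 0 => 0
  | n'.+1 => rw h s (pi h s)
             + \sum_(s' : S) transM h s (pi h s) s' * value_aux rw pi n' h.+1 s'
  end.

(* V^pi_h(s) in the machine MDP with reward rw (value 0 from step H on) *)
Definition value (rw : nat -> S -> option A -> R) (pi : nat -> S -> option A)
    (h : nat) (s : S) : R :=
  value_aux rw pi (horizon M - h) h s.

(* V^*_h(s) = max over deterministic Markov policies (the max is seeded with the
   value of one of the policies, so it is the genuine maximum) *)
Definition vstar (rw : nat -> S -> option A -> R) (h : nat) (s : S) : R :=
  \big[Num.max/value rw (pol_at defer_policy) h s]_(pi : policy)
     value rw (pol_at pi) h s.

Definition qstar (rw : nat -> S -> option A -> R) (h : nat) (s : S)
    (am : option A) : R :=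
  rw h s am + \sum_(s' : S) transM h s am s' * vstar rw h.+1 s'.

Definition vhuman (h : nat) (s : S) : R := value rewM (fun _ _ => None) h s.

Definition wf_hmdp : Prop :=
  (forall h s a s', (h < horizon M)%N -> 0 <= trans M h s a s') /\
      (forall h s a, (h < horizon M)%N -> \sum_(s' : S) trans M h s a s' = 1) /\
      (forall h s a, (h < horizon M)%N -> 0 <= rew M h s a <= 1) /\
      (forall h s a, (h < horizon M)%N -> 0 <= piH M h s a < 1) /\
      (forall h s, (h < horizon M)%N -> \sum_(a : A) piH M h s a = 1) /\
      (forall s a, 0 <= theta M s a <= 1).

End Defs.

(* Main.v *)
Require Import Defs.
From HB Require Import structures.
From mathcomp Require Import all_boot all_order all_algebra.
Import Order.TTheory GRing.Theory Num.Theory.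
Local Open Scope ring_scope.

Section Aux.
Variables (R : realFieldType) (S A : finType) (M : hmdp R S A).

Lemma transM_ge0 h s am s' : wf_hmdp M -> (h < horizon M)%N -> 0 <= transM M h s am s'.
Proof.
move=> [Ht [_ [_ [Hp [_ Hth]]]]] hH; apply: sumr_ge0 => a _.
apply: mulr_ge0; first exact: Ht.
case: am => [b|] /=; last by case/andP: (Hp h s a hH).
case: eqP => _; first by case/andP: (Hth s b).
apply: divr_ge0; first apply: mulr_ge0.
- by case/andP: (Hth s b) => _; rewrite subr_ge0.
- by case/andP: (Hp h s a hH).
- by case/andP: (Hp h s b hH) => _ /ltW; rewrite subr_ge0.
Qed.

Lemma bigmax_ge (I : eqType) (r : seq I) (x0 : R) (F : I -> R) i :
  i \in r -> F i <= \big[Num.max/x0]_(j <- r) F j.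
Proof.
elim: r => [|j r IH] //; rewrite inE big_cons le_max => /orP [/eqP ->|/IH ->].
  by rewrite lexx.
by rewrite orbT.
Qed.

Lemma bigmax_seed (I : Type) (r : seq I) (x0 : R) (F : I -> R) :
  x0 <= \big[Num.max/x0]_(j <- r) F j.
Proof.
elim: r => [|j r IH]; first by rewrite big_nil.
by rewrite big_cons le_max IH orbT.
Qed.

Lemma bigmax_le (I : Type) (r : seq I) (x0 y : R) (F : I -> R) :
  x0 <= y -> (forall i, F i <= y) -> \big[Num.max/x0]_(j <- r) F j <= y.
Proof.
move=> H0 HF; elim: r => [|j r IH]; first by rewrite big_nil.
by rewrite big_cons ge_max HF IH.
Qed.

Lemma value_aux_defer beta (pi : nat -> S -> option A) n h s :
  (forall h s, pi h s = None) ->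
  value_aux M (rewMb M beta) pi n h s = value_aux M (rewM M) (fun _ _ => None) n h s.
Proof.
move=> Hpi; elim: n h s => [|n IH] h s //=.
rewrite Hpi /rewMb subr0; congr (_ + _); apply: eq_bigr => s' _; by rewrite IH.
Qed.

Lemma value_aux_le beta (pi : nat -> S -> option A) n h s :
  wf_hmdp M -> 0 <= beta -> (h + n <= horizon M)%N ->
  value_aux M (rewMb M beta) pi n h s <= value_aux M (rewM M) pi n h s.
Proof.
move=> Hwf Hb; elim: n h s => [|n IH] h s //= Hn.
apply: lerD.
  rewrite /rewMb; case: (pi h s) => [a|]; last by rewrite subr0.
  by rewrite lerBlDr lerDl.
apply: ler_sum => s' _; apply: ler_wpM2l.
  by apply: transM_ge0 => //; apply: leq_trans Hn; rewrite -addn1 leq_add2l.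
by apply: IH; rewrite addSnnS.
Qed.

Lemma pol_at_defer h s : pol_at (defer_policy M) h s = None.
Proof. by rewrite /pol_at; case: insubP => // i _ _; rewrite !ffunE. Qed.

End Aux.

Theorem proposition1 (R : realFieldType) (S A : finType) (M : hmdp R S A)
  (beta : R) (pistar : policy M) :
  wf_hmdp M ->
  0 <= beta ->
  (* pistar is an optimal policy of the penalized MDP *)
  (forall (h : 'I_(horizon M)) (s : S),
      value M (rewMb M beta) (pol_at pistar) h s = vstar M (rewMb M beta) h s) ->
  (* chosen greedily w.r.t. Q^*_beta *)
  (forall (h : 'I_(horizon M)) (s : S) (a : option A),
      qstar M (rewMb M beta) h s a <= qstar M (rewMb M beta) h s (pistar h s)) ->
  forall (h : 'I_(horizon M)) (s : S),
    pistar h s != None ->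
    beta <= qstar M (rewM M) h s (pistar h s) - vhuman M h s.
Proof.
move=> Hwf Hb _ Hgr h s.
case E: (pistar h s) => [b|] // _.
have G := Hgr h s None; rewrite E in G.
have hH := ltn_ord h.
have Hst : forall s', vstar M (rewMb M beta) h.+1 s' <= vstar M (rewM M) h.+1 s'.
  move=> s'; rewrite /vstar; apply: bigmax_le.
    have K := @bigmax_seed R (policy M) (index_enum (policy M)) (value M (rewM M) (pol_at (defer_policy M)) h.+1 s') (fun pi => value M (rewM M) (pol_at pi) h.+1 s'). apply: le_trans K.
    apply: value_aux_le => //. by rewrite addnC subnK.
  move=> pi; have K := @bigmax_ge R (policy M) (index_enum (policy M)) (value M (rewM M) (pol_at (defer_policy M)) h.+1 s') (fun pi => value M (rewM M) (pol_at pi) h.+1 s') pi (mem_index_enum pi).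
  apply: le_trans K.
  by apply: value_aux_le => //; rewrite addnC subnK.
have Hhu : forall s', value M (rewM M) (fun _ _ => None) h.+1 s' <= vstar M (rewMb M beta) h.+1 s'.
  move=> s'; have K := @bigmax_seed R (policy M) (index_enum (policy M)) (value M (rewMb M beta) (pol_at (defer_policy M)) h.+1 s') (fun pi => value M (rewMb M beta) (pol_at pi) h.+1 s').
  apply: le_trans K.
  rewrite /value value_aux_defer //; exact: pol_at_defer.
rewrite /vhuman /value -(subnSK hH) /=.
move: G; rewrite /qstar /rewMb subr0 => G.
rewrite lerBrDr.
apply: le_trans (_ : rewM M h s (Some b) + \sum_s' transM M h s (Some b) s' * vstar M (rewMb M beta) h.+1 s' <= _).
  apply: le_trans (_ : beta + (rewM M h s None + \sum_s' transM M h s None s' * vstar M (rewMb M beta) h.+1 s') <= _).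
    rewrite !lerD2l; apply: ler_sum => s' _; apply: ler_wpM2l.
      exact: transM_ge0.
    exact: Hhu.
  by rewrite -lerBrDl addrAC.
rewrite lerD2l; apply: ler_sum => s' _; apply: ler_wpM2l; first exact: transM_ge0.
exact: Hst.
Qed.
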